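(* No finite Blaschke product of degree $\ge2$ is outer regular; that is, if $\phi(z)=\omega\prod_{j=1}^d\frac{a_j-z}{1-\overline{a_j}z}$ with $|\omega|=1$, $a_j\in\mathbb{U}$ and $d\ge2$, then $\phi$ has a critical value in $\{z\in\hat{\mathbb{C}}:|z|\ge1\}\cup\{\infty\}$.
   Context: $\mathbb{U}$ is the open unit disc, $\hat{\mathbb{C}}$ the Riemann sphere. Rational functions are regarded as maps $\hat{\mathbb{C}}\to\hat{\mathbb{C}}$; the degree of $p/q$ (relatively prime polynomials) is $\max(\deg p,\deg q)$. A point $w$ is a regular value of a rational function $R$ of degree $d$ if $R^{-1}(\{w\})$ consists of $d$ distinct points, and a critical value otherwise. A rational self-map $\phi$ of $\mathbb{U}$ is outer regular if all its critical values lie in $\mathbb{U}$, i.e. every point of $\{|z|\ge1\}\cup\{\infty\}$ is a regular value of $\phi$. *)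

(* Defs.v *)
From mathcomp Require Import all_boot all_order all_algebra.
From mathcomp.real_closed Require Import complex.
Set Implicit Arguments. Unset Strict Implicit. Unset Printing Implicit Defensive.
Import Order.TTheory GRing.Theory Num.Theory.
Local Open Scope ring_scope.

Section Rational.
Variable R : rcfType.
Local Notation C := (R[i]).

(* The Riemann sphere: [Some z] is the finite point z, [None] is infinity. *)
Definition sphere := option C.

(* degree of the rational function p/q (p, q relatively prime, q <> 0):
   max(deg p, deg q). *)
Definition rdeg (p q : {poly C}) : nat := (maxn (size p) (size q)).-1.

Definition reval (p q : {poly C}) (z : sphere) : sphere :=
  match z with
  | Some z => if q.[z] != 0 then Some (p.[z] / q.[z]) else None
  | None => if (size q < size p)%N then None
            else if (size p == size q)%N then Some (lead_coef p / lead_coef q)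
            else Some 0
  end.

Definition regular_value (p q : {poly C}) (w : sphere) : Prop :=
  exists s : seq sphere, [/\ uniq s, size s = rdeg p q &
                             forall z, reval p q z = w <-> z \in s].

Definition critical_value (p q : {poly C}) (w : sphere) : Prop :=
  ~ regular_value p q w.

(* Finite Blaschke product  omega * prod_j (a_j - z)/(1 - conj(a_j) z),
   given by its numerator and denominator (which are coprime when all
   |a_j| < 1). *)
Definition blaschke_num (omega : C) (a : seq C) : {poly C} :=
  omega%:P * \prod_(aj <- a) (aj%:P - 'X).
Definition blaschke_den (a : seq C) : {poly C} :=
  \prod_(aj <- a) (1 - (aj^*)%:P * 'X).

End Rational.

(* Main.v *)
Require Import Defs.
From mathcomp Require Import all_boot all_order all_algebra.
From mathcomp.real_closed Require Import complex.
From mathcomp Require Import zify ring lra.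
Import Order.TTheory GRing.Theory Num.Theory.
Local Open Scope ring_scope.

Lemma coefM_split (F : nzSemiRingType) (a b : {poly F}) (i j : nat) :
  (size a <= i.+1)%N -> (size b <= j.+1)%N -> (a * b)`_(i + j) = a`_i * b`_j.
Proof.
move=> sa sb; rewrite coefM.
have ltij : (i < (i + j).+1)%N by rewrite ltnS leq_addr.
rewrite (bigD1 (Ordinal ltij)) //= addKn big1 ?addr0 // => l /eqP nl.
have [ltli|ltil] := ltnP l i.
  rewrite [b`_ _](leq_sizeP _ _ sb) ?mulr0 //.
  by move: (ltn_ord l) => /= lt; lia.
have : (i < l)%N.
  rewrite ltn_neqAle ltil andbT.
  by apply/eqP => e; apply: nl; apply/val_inj.
by move=> lt; rewrite [a`_ _](leq_sizeP _ _ sa) ?mul0r.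
Qed.

Lemma Wsize (R : rcfType) (r q : {poly R[i]}) : r != 0 -> q != 0 ->
  (2 <= size r)%N -> size r != size q ->
  (size r + size q - 2 <= size (r^`() * q - r * q^`())%R)%N.
Proof.
move=> r0 q0 sr neq.
have sq : (1 <= size q)%N by rewrite size_poly_gt0.
have e1 : (r^`() * q)`_((size r - 2) + (size q - 1)) = r`_(size r-1) * q`_(size q-1) *+ (size r - 1).
  rewrite coefM_split; last 2 first.
  - by have := lt_size_deriv r0; lia.
  - by lia.
  by rewrite coef_deriv mulrnAl (_ : (size r - 2).+1 = size r - 1)%N //; lia.
have e2 : (r * q^`())`_((size r - 2) + (size q - 1)) = r`_(size r-1) * q`_(size q-1) *+ (size q - 1).
  have [n1|n2] := eqVneq (size q) 1%N.
    have := n1 => /eqP/size_poly1P [c c0 ->].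
    rewrite derivC mulr0 coef0 size_polyC c0 /= mulr0n //.
  have -> : ((size r - 2) + (size q - 1) = (size r - 1) + (size q - 2))%N by lia.
  rewrite coefM_split; last 2 first.
  - by lia.
  - by have := lt_size_deriv q0; lia.
  by rewrite coef_deriv mulrnAr (_ : (size q - 2).+1 = size q - 1)%N //; lia.
have ck : (r^`() * q - r * q^`())`_((size r - 2) + (size q - 1)) != 0.
  have lr : r`_(size r - 1) = lead_coef r by rewrite lead_coefE subn1.
  have lq : q`_(size q - 1) = lead_coef q by rewrite lead_coefE subn1.
  rewrite coefB e1 e2 lr lq -[_ *+ (size r - 1)]mulr_natr -[_ *+ (size q - 1)]mulr_natr -mulrBr.
  rewrite !mulf_neq0 ?lead_coef_eq0 // subr_eq0 eqr_nat.
  by apply: contra neq => /eqP; lia.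
apply: contraR ck; rewrite -ltnNge => lt.
have : (size (r^`() * q - r * q^`())%R <= size r - 2 + (size q - 1))%N by lia.
by move/leq_sizeP => /(_ _ (leqnn _)) ->.
Qed.

Lemma dbl_root (R : rcfType) (f : {poly R[i]}) z0 s : f != 0 -> root f z0 ->
  root f^`() z0 -> uniq s -> all (root f) s -> (size s + 2 <= size f)%N.
Proof.
move=> f0 /factor_theorem [h eh] df us rs.
have h0 : h != 0 by apply: contraNneq f0 => h0; rewrite eh h0 mul0r.
have hz : root h z0.
  move: df; rewrite eh derivM derivXsubC mulr1 /root !hornerE subrr mulr0 add0r.
  exact: id.
have rh : all (root h) s.
  apply/allP => x xs; move/allP: rs => /(_ x xs); rewrite eh /root hornerM hornerXsubC.
  have [->|nx] := eqVneq x z0; first by move=> _; exact: hz.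
  by rewrite mulf_eq0 subr_eq0 (negPf nx) orbF.
have := max_poly_roots h0 rh us.
rewrite eh size_mul ?polyXsubC_eq0 // size_XsubC => lt.
move: lt; rewrite -[size s]/(size s : nat); set k := size s; set m := size h; clearbody k m => lt.
change (k + 2 <= (m + 2).-1)%N; lia.
Qed.

Lemma seq_opt (T : eqType) (L : seq (option T)) : uniq L ->
  size L = (size (pmap id L) + (None \in L))%N.
Proof.
elim: L => [|[x|] L IH] //= /andP [nL uL].
  by rewrite inE /= IH // addSn.
by rewrite IH // (negPf nL) addn0 addn1.
Qed.

Lemma nz_comb (R : rcfType) (p q : {poly R[i]}) (c : R[i]) :
  (1 < size p)%N -> (forall x, root p x -> ~~ root q x) -> p - c%:P * q != 0.
Proof.
move=> sp nc; have [x px] : exists x, root p x.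
  by apply/closed_rootP; rewrite neq_ltn sp orbT.
apply/eqP => e; have qx := nc x px.
have ep : p = c%:P * q by apply/eqP; rewrite -subr_eq0 e.
have c0 : c = 0.
  move: px qx; rewrite /root ep hornerM hornerC mulf_eq0 => /orP [/eqP //|-> //].
by move: sp; rewrite ep c0 mul0r size_poly0.
Qed.

Lemma pmap_id_uniq (T : eqType) (L : seq (option T)) : uniq L -> uniq (pmap id L).
Proof. by apply: (pmap_uniq (g := Some)) => -[]. Qed.

Lemma mem_pmap_id (T : eqType) (L : seq (option T)) x : (x \in pmap id L) = (Some x \in L).
Proof. by rewrite mem_pmap map_id. Qed.

Lemma comb_drop (R : rcfType) (p q : {poly R[i]}) n :
  size p = n.+1 -> size q = n.+1 ->
  (size (p - (lead_coef p / lead_coef q)%:P * q)%R <= n)%N.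
Proof.
move=> sp sq'.
have q0 : q != 0 by rewrite -size_poly_gt0 sq'.
apply/leq_sizeP => j hj; rewrite coefB coefCM.
have [ej|gj] := eqVneq j n.
  rewrite ej -[p`_n]/(p`_(n.+1.-1)) -[q`_n]/(q`_(n.+1.-1)) -{1}sp -sq' -!lead_coefE.
  by rewrite divfK ?subrr // lead_coef_eq0.
have lj : (n.+1 <= j)%N by rewrite ltn_neqAle eq_sym gj hj.
by rewrite !(leq_sizeP _ _ _ _ lj) ?mulr0 ?subrr // ?sp ?sq'.
Qed.

Lemma comb_le (R : rcfType) (p q : {poly R[i]}) n c :
  (size p <= n)%N -> (size q <= n)%N -> (size (p - c%:P * q)%R <= n)%N.
Proof.
move=> sp sq; apply/leq_sizeP => j hj; rewrite coefB coefCM.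
by rewrite !(leq_sizeP _ _ _ _ hj) ?mulr0 ?subrr.
Qed.

Lemma gen_crit (R : rcfType) (p q : {poly R[i]}) (n : nat) :
  size p = n.+1 -> (2 <= n)%N -> (size q <= n.+1)%N -> q != 0 ->
  (forall x, root p x -> ~~ root q x) ->
  exists w, critical_value p q w.
Proof.
move=> sp n2 sq q0 nc.
have rd : rdeg p q = n by rewrite /rdeg sp (maxn_idPl sq).
have p0 : p != 0 by rewrite -size_poly_gt0 sp.
have sp1 : (1 < size p)%N by rewrite sp; lia.
pose W := p^`() * q - p * q^`().
have sW : (1 < size W)%N.
  have [lt|ge] := ltnP (size q) n.+1.
    have := @Wsize _ p q p0 q0; rewrite sp => /(_ _ _); rewrite -size_poly_gt0 in q0.
    move: lt q0; set k := size q; set m := size W; clearbody k m => lt q0 H.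
    have : (n.+1 + k - 2 <= m)%N by apply: H; lia.
    lia.
  have sq' : size q = n.+1 by apply/eqP; rewrite eqn_leq sq ge.
  pose c := lead_coef p / lead_coef q; pose r := p - c%:P * q.
  have r0 : r != 0 := @nz_comb _ p q c sp1 nc.
  have sr : (size r <= n)%N.
    exact: comb_drop.
  have eW : W = - (q^`() * r - q * r^`()).
    by rewrite /W /r derivB derivM derivC mul0r add0r; ring.
  have eW' : size (q^`() * r - q * r^`()) = size W by rewrite eW size_polyN.
  have := @Wsize _ q r q0 r0; rewrite sq'.
  rewrite eW' => /(_ _ _).
  rewrite -size_poly_gt0 in r0.
  move: sr r0; set k := size r; set m := size W; clearbody k m => sr r0 H.
  have : (n.+1 + k - 2 <= m)%N by apply: H; lia.
  lia.
have [z0 Wz] : exists z0, root W z0.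
  by apply/closed_rootP; rewrite neq_ltn sW orbT.
have Wz' : p^`().[z0] * q.[z0] = p.[z0] * q^`().[z0].
  by move: Wz; rewrite /root /W !hornerE subr_eq0 => /eqP.
have uP := @pmap_id_uniq _ _ .
have [qz|qz] := eqVneq q.[z0] 0.
  exists None => -[L [uL sL HL]].
  have pz : p.[z0] != 0 by apply/negP => /nc; rewrite /root qz eqxx.
  have dq : root q^`() z0.
    by move: Wz'; rewrite qz mulr0 => /esym/eqP; rewrite mulf_eq0 (negPf pz).
  have rs : all (root q) (pmap id L).
    apply/allP => x; rewrite mem_pmap_id => /HL /=.
    rewrite /root; case: eqP => //=.
  have rq : root q z0 by rewrite /root qz.
  have := @dbl_root _ q z0 _ q0 rq dq (uP _ _ uL) rs.
  have sz := @seq_opt _ L uL.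
  have noneC : None \in L -> (size q < size p)%N.
    move/HL => /=; case: ltnP => //; case: eqP => //.
  move: sz noneC; rewrite sL rd sp; case: (None \in L).
    move=> sz /(_ isT); move: sz sq; set k := size q; set m := size (pmap id L); clearbody k m.
    lia.
  move=> sz _; move: sz sq; set k := size q; set m := size (pmap id L); clearbody k m.
  lia.
pose c := p.[z0] / q.[z0]; pose f := p - c%:P * q.
exists (Some c) => -[L [uL sL HL]].
have f0 : f != 0 := @nz_comb _ p q c sp1 nc.
have rf : root f z0 by rewrite /root /f !hornerE /c divfK // subrr.
have df : root f^`() z0.
  rewrite /root /f derivB derivM derivC mul0r add0r.
  suff : (p^`() - c%:P * q^`()).[z0] * q.[z0] = 0.
    by move/eqP; rewrite mulf_eq0 (negPf qz) orbF.
  rewrite !hornerE mulrBl.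
  by rewrite /c Wz' mulrAC divfK // subrr.
have rs : all (root f) (pmap id L).
  apply/allP => x; rewrite mem_pmap_id => /HL /=.
  case: eqP => //= qx [e]; rewrite /root /f !hornerE -e divfK ?subrr //.
  by apply/eqP.
have := @dbl_root _ f z0 _ f0 rf df (uP _ _ uL) rs.
have sz := @seq_opt _ L uL.
have sf : (size f <= n.+1)%N by apply: comb_le; rewrite ?sp.
have noneC : None \in L -> (size f <= n)%N.
  move/HL => /=; case: ltnP => // le; rewrite sp in le.
  have sq' : size q = n.+1 by apply/eqP; rewrite eqn_leq sq le.
  rewrite sp sq' eqxx => -[ec]; rewrite /f -ec; exact: comb_drop.
move: sz noneC; rewrite sL rd; case: (None \in L).
  move=> sz /(_ isT); move: sz sf; set k := size f; set m := size (pmap id L); clearbody k m.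
  lia.
move=> sz _; move: sz sf; set k := size f; set m := size (pmap id L); clearbody k m.
lia.
Qed.

Lemma numE (R : rcfType) (om : R[i]) a x :
  (blaschke_num om a).[x] = om * \prod_(aj <- a) (aj - x).
Proof.
rewrite /blaschke_num hornerM hornerC horner_prod; congr (_ * _).
by apply: eq_bigr => aj _; rewrite !hornerE.
Qed.

Lemma denE (R : rcfType) a (x : R[i]) :
  (blaschke_den a).[x] = \prod_(aj <- a) (1 - aj^* * x).
Proof.
rewrite /blaschke_den horner_prod.
by apply: eq_bigr => aj _; rewrite !hornerE.
Qed.

Lemma prod_scal (F : comNzRingType) (T : Type) (a : seq T) (c : F) (G : T -> F) :
  \prod_(x <- a) (c * G x) = c ^+ size a * \prod_(x <- a) G x.
Proof.
elim: a => [|x a IH]; first by rewrite !big_nil expr0 mul1r.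
by rewrite !big_cons IH exprS /=; ring.
Qed.

Lemma conj_prod (R : rcfType) (T : Type) (a : seq T) (G : T -> R[i]) :
  (\prod_(x <- a) G x)^* = \prod_(x <- a) (G x)^*.
Proof. by rewrite rmorph_prod. Qed.

Lemma num_size (R : rcfType) (om : R[i]) a : om != 0 ->
  size (blaschke_num om a) = (size a).+1 /\
  lead_coef (blaschke_num om a) = om * (-1) ^+ size a.
Proof.
move=> om0; rewrite /blaschke_num.
have H : size (\prod_(aj <- a) (aj%:P - 'X)) = (size a).+1 /\
         lead_coef (\prod_(aj <- a) (aj%:P - 'X)) = (-1) ^+ size a.
  elim: a => [|x a [IHs IHl]]; first by rewrite big_nil size_poly1 lead_coef1 expr0.
  have ex : x%:P - 'X = - ('X - x%:P) by rewrite opprB.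
  have n0 : \prod_(aj <- a) (aj%:P - 'X) != 0 by rewrite -size_poly_gt0 IHs.
  have x0 : x%:P - 'X != 0 by rewrite ex oppr_eq0 polyXsubC_eq0.
  rewrite big_cons size_mul // lead_coefM IHs IHl ex size_polyN size_XsubC lead_coefN lead_coefXsubC.
  by rewrite exprS; split.
case: H => Hs Hl; rewrite size_Cmul // Hs lead_coefM lead_coefC Hl; split => //.
Qed.

Lemma den_factor (R : rcfType) (c : R[i]) :
  size (1 - c%:P * 'X) = (c != 0).+1 /\
  lead_coef (1 - c%:P * 'X) = if c == 0 then 1 else - c.
Proof.
have [->|c0] := eqVneq c 0; first by rewrite mul0r subr0 size_poly1 lead_coef1.
have e : 1 - c%:P * 'X = (- c)%:P * ('X - (c^-1)%:P).
  rewrite mulrBr -polyCM mulNr divff // !polyCN mulNr opprK addrC.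
  by [].
rewrite e size_Cmul ?oppr_eq0 // size_XsubC lead_coefM lead_coefC lead_coefXsubC mulr1.
by [].
Qed.

Lemma den_size (R : rcfType) (a : seq R[i]) :
  size (blaschke_den a) = (count (fun aj => aj != 0) a).+1.
Proof.
rewrite /blaschke_den; elim: a => [|x a IH]; first by rewrite big_nil size_poly1.
have n0 : \prod_(aj <- a) (1 - (aj^*)%:P * 'X) != 0 by rewrite -size_poly_gt0 IH.
have [sx _] := @den_factor _ x^*.
have x0 : 1 - (x^*)%:P * 'X != 0 by rewrite -size_poly_gt0 sx.
rewrite big_cons size_mul // IH sx conjC_eq0 /=.
by case: (x != 0).
Qed.

Lemma den_lead (R : rcfType) (a : seq R[i]) : all (fun aj => aj != 0) a ->
  lead_coef (blaschke_den a) = \prod_(aj <- a) (- aj^*).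
Proof.
move=> /allP H; rewrite /blaschke_den lead_coef_prod big_seq [RHS]big_seq.
apply: eq_bigr => aj /H a0; have [_ ->] := @den_factor _ aj^*.
by rewrite conjC_eq0 (negPf a0).
Qed.

Lemma nocommon (R : rcfType) (om : R[i]) a x : om != 0 ->
  (forall aj, aj \in a -> `|aj| < 1) ->
  root (blaschke_num om a) x -> ~~ root (blaschke_den a) x.
Proof.
move=> om0 Ha; rewrite /root numE denE mulf_eq0 prodf_seq_eq0 (negPf om0) /=.
case/hasP => ak aka /=; rewrite subr_eq0 => /eqP <-{x}.
rewrite prodf_seq_eq0; apply/hasPn => aj aja /=; rewrite subr_eq0 eq_sym.
apply/negP => /eqP e.
have : `|aj^* * ak| < 1.
  rewrite normrM norm_conjC; apply: le_lt_trans (Ha _ aka).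
  by apply: ler_piMl; [exact: normr_ge0 | exact: ltW (Ha _ aja)].
by rewrite e normr1 ltxx.
Qed.

Definition sig (R : rcfType) (z : sphere R) : sphere R :=
  match z with None => Some 0 | Some z => if z == 0 then None else Some (z^*)^-1 end.
Arguments sig {R}.

Lemma sigK (R : rcfType) : involutive (@sig R).
Proof.
case=> [z|] /=; last by rewrite eqxx.
have [->|nz] := eqVneq z 0; first by [].
by rewrite /= invr_eq0 conjC_eq0 (negPf nz) fmorphV /= conjCK invrK.
Qed.

Lemma refl_pts (R : rcfType) (om : R[i]) a x : `|om| = 1 -> x != 0 ->
  (blaschke_num om a).[(x^*)^-1] = om * (- (x^*)^-1)^+size a * ((blaschke_den a).[x])^* /\
  (blaschke_den a).[(x^*)^-1] = om * (- (x^*)^-1)^+size a * ((blaschke_num om a).[x])^*.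
Proof.
move=> om1 x0; set y := (x^*)^-1.
have omc : om * om^* = 1 by rewrite -normCK om1 expr1n.
have xy : x^* * y = 1 by rewrite /y divff // conjC_eq0.
rewrite numE denE numE denE; split.
  rewrite -mulrA; congr (_ * _); rewrite conj_prod -prod_scal.
  apply: eq_bigr => aj _; rewrite rmorphB /= rmorph1 rmorphM /= conjCK.
  by rewrite -[X in X - y = _]mul1r -{1}xy; ring.
rewrite rmorphM /= conj_prod.
transitivity ((om * om^*) * ((- y) ^+ size a * \prod_(aj <- a) (aj - x)^*)); last by ring.
rewrite omc mul1r -prod_scal; apply: eq_bigr => aj _; rewrite rmorphB /=.
by rewrite -xy; ring.
Qed.

Lemma refl_none (R : rcfType) (om : R[i]) a : `|om| = 1 ->
  reval (blaschke_num om a) (blaschke_den a) (Some 0) =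
  sig (reval (blaschke_num om a) (blaschke_den a) None).
Proof.
move=> om1.
have om0 : om != 0 by rewrite -normr_eq0 om1 oner_eq0.
have omc : om * om^* = 1 by rewrite -normCK om1 expr1n.
have q0 : (blaschke_den a).[0] = 1.
  by rewrite denE big1 // => aj _; rewrite mulr0 subr0.
have [sp lp] := @num_size _ om a om0.
rewrite /= q0 oner_neq0 divr1 numE sp den_size.
under eq_bigr do rewrite subr0.
have [Hall|Hn] := boolP (all (fun aj => aj != 0) a).
  have ca : count (fun aj => aj != 0) a = size a by apply/eqP; rewrite -all_count.
  rewrite ca ltnn eqxx lp den_lead //.
  have ep : \prod_(aj <- a) (- aj^*) = (-1) ^+ size a * \prod_(aj <- a) aj^*.
    by rewrite -prod_scal; apply: eq_bigr => aj _; rewrite mulN1r.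
  have P0 : \prod_(aj <- a) aj != 0.
    by rewrite prodf_seq_eq0; apply/hasPn => aj /(allP Hall).
  have s0 : (-1) ^+ size a != 0 :> R[i] by rewrite expf_eq0 oppr_eq0 oner_eq0 andbF.
  rewrite ep -conj_prod.
  set P := \prod_(aj <- a) aj; set s := (-1) ^+ size a.
  have PC0 : P^* != 0 by rewrite conjC_eq0.
  have nz : om * s / (s * P^*) != 0.
    by rewrite !mulf_neq0 // invr_eq0 mulf_neq0.
  rewrite /sig (negPf nz).
  have sc : s^* = s by rewrite /s rmorphXn /= conjCN1.
  have omi : om^* = om^-1 by rewrite -[om^*]mul1r -(mulVf om0) -mulrA omc mulr1.
  rewrite fmorph_div /= !rmorphM /= conjCK omi sc; congr Some; field.
  by rewrite om0 s0 P0.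
have ca : (count (fun aj => aj != 0%R) a < size a)%N.
  have := count_predC (fun aj => aj != 0%R) a.
  move: Hn; rewrite -has_predC has_count.
  set k1 := count _ a; set k2 := count _ a; clearbody k1 k2 => h1 h2.
  by rewrite -h2 -{1}[k2]addn0 ltn_add2l.
rewrite ltnS ca /=; congr Some.
have : \prod_(aj <- a) aj == 0.
  rewrite prodf_seq_eq0; move: Hn; rewrite -has_predC.
  by apply: sub_has => aj /= /negPn.
by move/eqP ->; rewrite mulr0.
Qed.

Lemma refl_reval (R : rcfType) (om : R[i]) a : `|om| = 1 ->
  (forall aj, aj \in a -> `|aj| < 1) -> forall z,
  reval (blaschke_num om a) (blaschke_den a) (sig z) =
  sig (reval (blaschke_num om a) (blaschke_den a) z).
Proof.
move=> om1 Ha.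
have om0 : om != 0 by rewrite -normr_eq0 om1 oner_eq0.
case=> [x|]; last exact: (@refl_none _ om a om1).
have [->|x0] := eqVneq x 0.
  have := @refl_none _ om a om1; rewrite /= eqxx => ->; by rewrite sigK.
rewrite /= (negPf x0) /=.
have [ep eq] := @refl_pts _ om a x om1 x0.
set K := om * _ in ep eq.
have K0 : K != 0.
  by rewrite /K mulf_neq0 // expf_eq0 oppr_eq0 invr_eq0 conjC_eq0 (negPf x0) andbF.
rewrite ep eq.
have [px|px] := eqVneq (blaschke_num om a).[x] 0.
  have qx : (blaschke_den a).[x] != 0 by have := @nocommon _ om a x om0 Ha; rewrite /root px eqxx; apply.
  by rewrite px rmorph0 mulr0 qx /= mul0r /= !eqxx.
have -> : (K * (blaschke_num om a).[x]^* != 0) by rewrite mulf_neq0 ?conjC_eq0.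
have [qx|qx] := eqVneq (blaschke_den a).[x] 0.
  by rewrite qx rmorph0 mulr0 mul0r.
rewrite /= mulf_eq0 invr_eq0 (negPf px) (negPf qx) /=.
rewrite -mulf_div divff // mul1r fmorph_div /= invf_div.
by [].
Qed.

Lemma reg_transfer (R : rcfType) (p q : {poly R[i]}) w :
  (forall z, reval p q (sig z) = sig (reval p q z)) ->
  regular_value p q (sig w) -> regular_value p q w.
Proof.
move=> H [L [uL sL HL]]; exists (map sig L); split.
- by rewrite map_inj_uniq //; apply: can_inj (@sigK R).
- by rewrite size_map.
move=> z; rewrite -{2}(@sigK R z) mem_map; last exact: can_inj (@sigK R).
rewrite -HL H; split; first by move=> ->.
by move/(can_inj (@sigK R)).
Qed.

Theorem proposition4p4 (R : rcfType) (omega : R[i]) (a : seq R[i]) :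
  `|omega| = 1 ->
  (forall aj, aj \in a -> `|aj| < 1) ->
  (2 <= size a)%N ->
  exists w : sphere R,
    (w = None \/ exists z : R[i], w = Some z /\ 1 <= `|z|) /\
    critical_value (blaschke_num omega a) (blaschke_den a) w.
Proof.
move=> om1 Ha sa.
have om0 : omega != 0 by rewrite -normr_eq0 om1 oner_eq0.
have [sp _] := @num_size _ omega a om0.
have sq : (size (blaschke_den a) <= (size a).+1)%N by rewrite den_size ltnS count_size.
have q0 : blaschke_den a != 0 by rewrite -size_poly_gt0 den_size.
have nc := @nocommon _ omega a _ om0 Ha.
have [w cw] := @gen_crit R _ _ (size a) sp sa sq q0 nc.
case: w cw => [z|] cw; last by exists None; split; [left|].
have [z1|z1] := boolP (1 <= `|z|).
  by exists (Some z); split => //; right; exists z.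
have zl : `|z| < 1 by rewrite real_ltNge ?normr_real ?real1.
have tr : regular_value (blaschke_num omega a) (blaschke_den a) (sig (Some z)) ->
    regular_value (blaschke_num omega a) (blaschke_den a) (Some z).
  by apply: reg_transfer; apply: refl_reval.
move: tr; rewrite /sig; have [ez|z0] := eqVneq z 0 => tr.
  by exists None; split; [left | move=> /tr; exact: cw].
exists (Some (z^*)^-1); split; last by move=> /tr; exact: cw.
right; exists (z^*)^-1; split => //.
rewrite normfV norm_conjC invf_ge1 ?normr_gt0 //; exact: ltW.
Qed.
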